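(* Let $a<b$ be real numbers, let $X:=C_0[a,b]:=\{v\in C[a,b]\mid v(a)=v(b)=0\}$, let $g\in C[a,b]$ with $g\neq 0$, let $s\geq 2$ be an integer and let $p\in[1,\infty]$. Equip $X$ with the norm $\|\cdot\|_p$ (the $L^p(a,b)$-norm, with $\|\cdot\|_\infty$ the supremum norm). Then $$\lim_{h\in X,\ \|h\|_p\to 0}\ \frac{1}{\|h\|_p}\int_a^b g\,h^s=0 \quad\Longleftrightarrow\quad p\geq s .$$
   Context: Integrals $\int_a^b \varphi$ denote the Riemann integral $\int_a^b\varphi(x)\,dx$. The limit is taken over $h\in X\setminus\{0\}$ with $\|h\|_p\to 0$. *)

(* Defs.v *)
From Stdlib Require Import Reals.
From Coquelicot Require Import Coquelicot.
Open Scope R_scope.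

Definition cont_on (a b : R) (f : R -> R) : Prop :=
  forall x, a <= x <= b ->
    filterlim f (within (fun y => a <= y <= b) (locally x)) (locally (f x)).

Definition in_X (a b : R) (h : R -> R) : Prop :=
  cont_on a b h /\ h a = 0 /\ h b = 0.

(* real power x^q for x >= 0, with 0^q = 0 (q > 0) *)
Definition rpow (x q : R) : R :=
  if Req_EM_T x 0 then 0 else Rpower x q.

Definition sup_norm (a b : R) (h : R -> R) : R :=
  real (Lub_Rbar (fun y => exists x, a <= x <= b /\ y = Rabs (h x))).

Definition pnorm (a b : R) (p : Rbar) (h : R -> R) : R :=
  match p with
  | Finite q => rpow (RInt (fun x => rpow (Rabs (h x)) q) a b) (/ q)
  | _ => sup_norm a b h
  end.

(* Main.v *)
Require Import Defs.
From Stdlib Require Import Reals Lra Lia.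
From Coquelicot Require Import Coquelicot.
Open Scope R_scope.

Lemma ballR (x e y : R) : ball x e y <-> Rabs (y - x) < e.
Proof. reflexivity. Qed.

Definition clamp (a b x : R) := Rmax a (Rmin b x).

Lemma clamp_in a b x : a <= b -> a <= clamp a b x <= b.
Proof. intros; unfold clamp, Rmax, Rmin; repeat destruct Rle_dec; lra. Qed.

Lemma clamp_id a b x : a <= x <= b -> clamp a b x = x.
Proof. intros; unfold clamp, Rmax, Rmin; repeat destruct Rle_dec; lra. Qed.

Lemma clamp_lip a b x y : a <= b -> Rabs (clamp a b y - clamp a b x) <= Rabs (y - x).
Proof. intros; unfold clamp, Rmax, Rmin; repeat destruct Rle_dec;
  unfold Rabs; repeat destruct Rcase_abs; lra. Qed.

Lemma cont_clamp (a b : R) (f : R -> R) : a <= b -> cont_on a b f ->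
  forall x, continuous (fun y => f (clamp a b y)) x.
Proof.
  intros hab hf x.
  unfold continuous.
  apply (filterlim_comp _ _ _ (clamp a b) f _ (within (fun y => a <= y <= b) (locally (clamp a b x)))).
  - intros P [eps Heps]. exists eps. intros y Hy.
    apply Heps. 2: apply clamp_in; auto.
    apply ballR. apply ballR in Hy. eapply Rle_lt_trans. apply clamp_lip; auto. auto.
  - apply hf. apply clamp_in; auto.
Qed.

Lemma ex_RInt_cont_on a b f : a <= b -> cont_on a b f -> ex_RInt f a b.
Proof.
  intros hab hf.
  apply ex_RInt_ext with (fun y => f (clamp a b y)).
  - intros x Hx. rewrite Rmin_left in Hx by lra. rewrite Rmax_right in Hx by lra.
    rewrite clamp_id; lra.
  - apply (ex_RInt_continuous (V := R_CompleteNormedModule)). intros; apply cont_clamp; auto.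
Qed.

Lemma cont_on_glob a b f : (forall x, continuous f x) -> cont_on a b f.
Proof.
  intros H x _. eapply filterlim_filter_le_1. apply filter_le_within. apply H.
Qed.

Lemma cont_on_comp a b f (phi : R -> R) : cont_on a b f -> (forall y, continuous phi y) ->
  cont_on a b (fun x => phi (f x)).
Proof.
  intros hf hp x Hx. eapply filterlim_comp. apply hf; auto. apply hp.
Qed.

Lemma cont_on_mult a b f g : cont_on a b f -> cont_on a b g ->
  cont_on a b (fun x => f x * g x).
Proof.
  intros hf hg x Hx.
  eapply filterlim_comp_2. apply hf; auto. apply hg; auto.
  apply (filterlim_mult (K := R_AbsRing)).
Qed.

Lemma cont_on_const a b c : cont_on a b (fun _ => c).
Proof. apply cont_on_glob. intros; apply continuous_const. Qed.

Lemma cont_on_pow a b f n : cont_on a b f -> cont_on a b (fun x => f x ^ n).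
Proof.
  intros hf; induction n; simpl.
  - apply cont_on_const.
  - apply cont_on_mult; auto.
Qed.

Lemma cont_on_bound a b f : a <= b -> cont_on a b f ->
  exists M, 0 <= M /\ forall x, a <= x <= b -> Rabs (f x) <= M.
Proof.
  intros hab hf.
  destruct (continuity_ab_maj (fun y => Rabs (f (clamp a b y))) a b hab) as [m [Hm _]].
  { intros c _. apply continuity_pt_filterlim.
    apply (continuous_Rabs_comp (fun y => f (clamp a b y))). apply cont_clamp; auto. }
  exists (Rabs (f (clamp a b m))). split. apply Rabs_pos.
  intros x Hx. specialize (Hm x Hx). simpl in Hm. rewrite clamp_id in Hm; auto.
Qed.
Lemma rpow_ge0 x q : 0 <= rpow x q.
Proof. unfold rpow; destruct Req_EM_T. lra. unfold Rpower. left; apply exp_pos. Qed.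

Lemma rpow_pos x q : 0 < x -> rpow x q = Rpower x q.
Proof. intros; unfold rpow; destruct Req_EM_T; auto; lra. Qed.

Lemma rpow_0 q : rpow 0 q = 0.
Proof. unfold rpow; destruct Req_EM_T; auto; lra. Qed.

Lemma rpow_gt0 x q : 0 < x -> 0 < rpow x q.
Proof. intros; rewrite rpow_pos; auto; apply exp_pos. Qed.

Lemma cont_rpow_abs q : 0 < q -> forall u, continuous (fun v => rpow (Rabs v) q) u.
Proof.
  intros hq u.
  destruct (Req_dec u 0) as [->|hu].
  - unfold continuous. rewrite Rabs_R0, rpow_0.
    apply filterlim_locally. intros eps.
    assert (hd : 0 < Rpower eps (/q)) by apply exp_pos.
    exists (mkposreal _ hd). intros v Hv. apply ballR in Hv. apply ballR. simpl in *.
    rewrite Rminus_0_r in *. rewrite Rabs_pos_eq by apply rpow_ge0.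
    destruct (Req_dec v 0) as [->|hv]. rewrite Rabs_R0, rpow_0. apply cond_pos.
    rewrite rpow_pos by (apply Rabs_pos_lt; auto).
    replace (pos eps) with (Rpower (Rpower eps (/q)) q).
    apply Rlt_Rpower_l; auto. split; auto. apply Rabs_pos_lt; auto. change (Rabs (v - 0) < Rpower eps (/q)) in Hv; rewrite Rminus_0_r in Hv; exact Hv.
    rewrite Rpower_mult. rewrite Rinv_l by lra. rewrite Rpower_1. reflexivity. apply cond_pos.
  - apply continuous_ext_loc with (fun v => exp (q * ln (Rabs v))).
    + assert (hd : 0 < Rabs u) by (apply Rabs_pos_lt; auto).
      exists (mkposreal _ hd). intros y Hy. apply ballR in Hy. simpl in Hy.
      rewrite rpow_pos. reflexivity.
      apply Rabs_pos_lt. intro; subst. change (Rabs (0 - u) < Rabs u) in Hy. rewrite Rminus_0_l, Rabs_Ropp in Hy. lra.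
    + apply continuous_exp_comp. apply (continuous_mult (K := R_AbsRing)).
      apply continuous_const.
      apply continuous_comp. apply continuous_Rabs. apply continuous_ln.
      apply Rabs_pos_lt; auto.
Qed.

Lemma cont_on_rpow a b f q : 0 < q -> cont_on a b f -> cont_on a b (fun x => rpow (Rabs (f x)) q).
Proof. intros hq hf. apply (cont_on_comp a b f (fun v => rpow (Rabs v) q)); auto. apply cont_rpow_abs; auto. Qed.

Lemma gen_bound a b g h s G (Phi : R -> R) : a <= b -> cont_on a b g -> cont_on a b h ->
  ex_RInt Phi a b -> (forall x, a <= x <= b -> Rabs (g x) <= G) ->
  (forall x, a <= x <= b -> Rabs (h x) ^ s <= Phi x) ->
  Rabs (RInt (fun x => g x * h x ^ s) a b) <= G * RInt Phi a b.
Proof.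
  intros hab hg hh hP hG hPhi.
  assert (hi : ex_RInt (fun x => g x * h x ^ s) a b).
  { apply ex_RInt_cont_on; auto. apply cont_on_mult; auto. apply cont_on_pow; auto. }
  eapply Rle_trans. apply abs_RInt_le; auto.
  assert (E : RInt (fun x => G * Phi x) a b = G * RInt Phi a b).
  { apply (RInt_scal (V := R_CompleteNormedModule)); auto. }
  rewrite <- E. apply RInt_le; auto.
  - apply ex_RInt_cont_on; auto. apply (cont_on_comp a b _ Rabs).
    apply cont_on_mult; auto. apply cont_on_pow; auto. apply continuous_Rabs.
  - apply (ex_RInt_scal (V := R_NormedModule)); auto.
  - intros x Hx. rewrite Rabs_mult, <- RPow_abs.
    assert (0 <= Rabs (g x)) by apply Rabs_pos.
    assert (0 <= Rabs (h x) ^ s) by (apply pow_le, Rabs_pos).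
    specialize (hG x ltac:(lra)). specialize (hPhi x ltac:(lra)).
    apply Rmult_le_compat; auto.
Qed.

Lemma sup_norm_ok a b h : a <= b -> cont_on a b h ->
  0 <= sup_norm a b h /\ forall x, a <= x <= b -> Rabs (h x) <= sup_norm a b h.
Proof.
  intros hab hh.
  destruct (cont_on_bound a b h hab hh) as [M [HM0 HM]].
  unfold sup_norm.
  set (E := fun y => exists x, a <= x <= b /\ y = Rabs (h x)).
  destruct (Lub_Rbar_correct E) as [Hub Hlub].
  assert (HE : forall x, a <= x <= b -> Rbar_le (Rabs (h x)) (Lub_Rbar E)).
  { intros x Hx. apply Hub. exists x; auto. }
  assert (HL : Rbar_le (Lub_Rbar E) M).
  { apply Hlub. unfold is_ub_Rbar. intros y [x [Hx ->]]. simpl. auto. }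
  destruct (Lub_Rbar E) as [l| |] eqn:El.
  - simpl. split.
    + specialize (HE a ltac:(lra)). simpl in HE. eapply Rle_trans; [apply Rabs_pos | exact HE].
    + intros x Hx. specialize (HE x Hx). simpl in HE. auto.
  - simpl in HL. contradiction.
  - specialize (HE a ltac:(lra)). simpl in HE. contradiction.
Qed.

Lemma pw (u lam q : R) (s : nat) : 0 <= u -> 0 < lam -> INR s <= q ->
  u ^ s <= lam ^ s * rpow u q / Rpower lam q + lam ^ s.
Proof.
  intros hu hl hq.
  assert (hP : 0 < Rpower lam q) by apply exp_pos.
  destruct (Rle_lt_dec u lam) as [H|H].
  - assert (0 <= lam ^ s * rpow u q / Rpower lam q).
    { unfold Rdiv. apply Rmult_le_pos. apply Rmult_le_pos. apply pow_le; lra. apply rpow_ge0.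
      left; apply Rinv_0_lt_compat; auto. }
    assert (u ^ s <= lam ^ s) by (apply pow_incr; lra). lra.
  - assert (hy : 1 < u / lam) by (apply Rlt_div_r; lra).
    rewrite rpow_pos by lra.
    assert (E1 : u ^ s = lam ^ s * (u / lam) ^ s).
    { rewrite <- Rpow_mult_distr. f_equal. field. lra. }
    assert (E2 : Rpower u q = Rpower (u / lam) q * Rpower lam q).
    { rewrite Rpower_mult_distr by (try apply Rdiv_lt_0_compat; lra). f_equal. field. lra. }
    rewrite E2, E1.
    assert ((u / lam) ^ s <= Rpower (u / lam) q).
    { rewrite <- Rpower_pow by lra. apply Rle_Rpower; lra. }
    assert (0 < lam ^ s) by (apply pow_lt; lra).
    assert (lam ^ s * (u / lam) ^ s <= lam ^ s * Rpower (u / lam) q) by (apply Rmult_le_compat_l; lra).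
    replace (lam ^ s * (Rpower (u / lam) q * Rpower lam q) / Rpower lam q) with
      (lam ^ s * Rpower (u / lam) q) by (field; lra). lra.
Qed.

Lemma fwd_C a b g s p : a < b -> cont_on a b g -> Rbar_le (Finite 1) p ->
  Rbar_le (Finite (INR s)) p ->
  exists C, 0 <= C /\ forall h, cont_on a b h ->
    0 <= pnorm a b p h /\
    (0 < pnorm a b p h -> Rabs (RInt (fun x => g x * h x ^ s) a b) <= C * pnorm a b p h ^ s).
Proof.
  intros hab hg hp1 hps.
  destruct (cont_on_bound a b g ltac:(lra) hg) as [G [HG0 HG]].
  destruct p as [q| |]; simpl in hp1, hps; try contradiction.
  - exists (G * (1 + (b - a))). split. apply Rmult_le_pos; lra.
    intros h hh. unfold pnorm.
    set (F := fun x => rpow (Rabs (h x)) q).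
    assert (hF : ex_RInt F a b) by (apply ex_RInt_cont_on; [lra|]; apply cont_on_rpow; auto; lra).
    assert (hI : 0 <= RInt F a b).
    { apply RInt_ge_0; auto; try lra. intros; apply rpow_ge0. }
    split. apply rpow_ge0.
    intros hN.
    destruct hI as [hI|hI]. 2:{ rewrite <- hI, rpow_0 in hN. lra. }
    rewrite rpow_pos in * by auto.
    set (lam := Rpower (RInt F a b) (/ q)) in *.
    assert (Hlq : Rpower lam q = RInt F a b).
    { unfold lam. rewrite Rpower_mult, Rinv_l by lra. apply Rpower_1; auto. }
    set (Phi := fun x => scal (lam ^ s / Rpower lam q) (F x) + lam ^ s).
    assert (hPhi : ex_RInt Phi a b).
    { apply (ex_RInt_plus (V := R_NormedModule) (fun x => scal (lam ^ s / Rpower lam q) (F x)) (fun _ => lam ^ s)).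
      apply (ex_RInt_scal (V := R_NormedModule)); auto. apply ex_RInt_const. }
    eapply Rle_trans. apply (gen_bound a b g h s G Phi); auto; try lra.
    + intros x Hx. unfold Phi, F. unfold scal; simpl; unfold mult; simpl.
      generalize (pw (Rabs (h x)) lam q s (Rabs_pos _) hN hps). intros Hp.
      replace (lam ^ s / Rpower lam q * rpow (Rabs (h x)) q) with (lam ^ s * rpow (Rabs (h x)) q / Rpower lam q) by (unfold Rdiv; ring).
      exact Hp.
    + assert (E : RInt Phi a b = lam ^ s * (1 + (b - a))).
      { unfold Phi. rewrite (RInt_plus (V := R_CompleteNormedModule) (fun x => scal (lam ^ s / Rpower lam q) (F x)) (fun _ => lam ^ s)).
        rewrite (RInt_scal (V := R_CompleteNormedModule)) by auto.
        rewrite RInt_const. unfold plus, scal; simpl; unfold mult; simpl.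
        rewrite Hlq. field. lra.
        apply (ex_RInt_scal (V := R_NormedModule)); auto. apply ex_RInt_const. }
      rewrite E. right; ring.
  - exists (G * (b - a)). split. apply Rmult_le_pos; lra.
    intros h hh. unfold pnorm.
    destruct (sup_norm_ok a b h ltac:(lra) hh) as [H0 HM].
    split; auto. intros hN.
    eapply Rle_trans. apply (gen_bound a b g h s G (fun _ => sup_norm a b h ^ s)); auto; try lra.
    + apply ex_RInt_const.
    + intros x Hx. apply pow_incr. split. apply Rabs_pos. auto.
    + rewrite RInt_const. unfold scal; simpl; unfold mult; simpl. right; ring.
Qed.

Lemma fwd a b g s p : a < b -> cont_on a b g -> Rbar_le (Finite 1) p -> (2 <= s)%nat ->
  Rbar_le (Finite (INR s)) p ->
  forall eps : R, 0 < eps -> exists delta : R, 0 < delta /\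
      forall h : R -> R, in_X a b h ->
        (exists x, a <= x <= b /\ h x <> 0) ->
        pnorm a b p h < delta ->
        Rabs (/ pnorm a b p h * RInt (fun x => g x * h x ^ s) a b) < eps.
Proof.
  intros hab hg hp1 hs hps eps he.
  destruct (fwd_C a b g s p hab hg hp1 hps) as [C [HC0 HC]].
  exists (Rmin 1 (eps / (C + 1))). split.
  { apply Rmin_pos. lra. apply Rdiv_lt_0_compat; lra. }
  intros h [hh _] _ hN.
  destruct (HC h hh) as [H0 Hb].
  set (N := pnorm a b p h) in *.
  destruct H0 as [Np|N0].
  2:{ rewrite <- N0, Rinv_0, Rmult_0_l, Rabs_R0. auto. }
  specialize (Hb Np).
  assert (hN1 : N < 1) by (eapply Rlt_le_trans; [exact hN| apply Rmin_l]).
  assert (hN2 : N < eps / (C + 1)) by (eapply Rlt_le_trans; [exact hN| apply Rmin_r]).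
  rewrite Rabs_mult, Rabs_inv, Rabs_pos_eq by lra.
  assert (N ^ s <= N * N).
  { destruct s as [|[|s]]; try lia. simpl.
    assert (N ^ s <= 1). { rewrite <- (pow1 s). apply pow_incr; lra. }
    assert (0 <= N * N) by nra. nra. }
  set (X := RInt (fun x => g x * h x ^ s) a b) in *.
  assert (hX : / N * Rabs X <= C * N).
  { apply Rmult_le_reg_l with N; auto. rewrite <- Rmult_assoc, Rinv_r, Rmult_1_l by lra. nra. }
  assert ((C + 1) * N < eps).
  { replace eps with ((C + 1) * (eps / (C + 1))) by (field; lra).
    apply Rmult_lt_compat_l; lra. }
  nra.
Qed.
Lemma lip_cont (f : R -> R) K : 0 <= K -> (forall x z, Rabs (f x - f z) <= K * Rabs (x - z)) ->
  forall x, continuous f x.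
Proof.
  intros hK hL x. apply filterlim_locally. intros eps.
  assert (hd : 0 < eps / (K + 1)) by (apply Rdiv_lt_0_compat; [apply cond_pos|lra]).
  exists (mkposreal _ hd). intros y Hy.
  change (Rabs (y - x) < eps / (K + 1)) in Hy. change (Rabs (f y - f x) < eps).
  eapply Rle_lt_trans. apply hL.
  assert (0 <= Rabs (y - x)) by apply Rabs_pos.
  assert ((K + 1) * Rabs (y - x) < eps).
  { replace (pos eps) with ((K + 1) * (eps / (K + 1))) by (field; lra).
    apply Rmult_lt_compat_l; lra. }
  nra.
Qed.

Definition tent (c w t x : R) : R :=
  t * ((1 - Rabs (x - c) / w + Rabs (1 - Rabs (x - c) / w)) / 2).

Lemma tent_cont c w t : 0 < w -> 0 <= t -> forall x, continuous (tent c w t) x.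
Proof.
  intros hw ht. apply lip_cont with (t / w).
  { apply Rdiv_le_0_compat; lra. }
  intros x z. unfold tent.
  assert (Huv : forall u v, u = 1 - Rabs (x - c) / w -> v = 1 - Rabs (z - c) / w ->
     Rabs (u - v) <= Rabs (x - z) / w).
  { intros u v -> ->. replace (1 - Rabs (x - c) / w - (1 - Rabs (z - c) / w)) with
      ((Rabs (z - c) - Rabs (x - c)) * / w) by (field; lra).
    rewrite Rabs_mult, (Rabs_pos_eq (/ w)) by (left; apply Rinv_0_lt_compat; lra).
    unfold Rdiv. apply Rmult_le_compat_r. left; apply Rinv_0_lt_compat; lra.
    replace (x - z) with ((x - c) - (z - c)) by ring.
    rewrite <- Rabs_Ropp. replace (- (Rabs (z - c) - Rabs (x - c))) with (Rabs (x - c) - Rabs (z - c)) by ring.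
    apply Rabs_triang_inv2. }
  specialize (Huv _ _ eq_refl eq_refl).
  set (u := 1 - Rabs (x - c) / w) in *. set (v := 1 - Rabs (z - c) / w) in *.
  clearbody u v.
  replace (t * ((u + Rabs u) / 2) - t * ((v + Rabs v) / 2)) with (t * ((u - v + (Rabs u - Rabs v)) / 2)) by field.
  rewrite Rabs_mult, Rabs_pos_eq by lra.
  replace (t / w * Rabs (x - z)) with (t * (Rabs (x - z) / w)) by (field; lra).
  apply Rmult_le_compat_l; auto.
  assert (Rabs (Rabs u - Rabs v) <= Rabs (u - v)) by apply Rabs_triang_inv2.
  assert (Rabs (u - v + (Rabs u - Rabs v)) <= Rabs (u - v) + Rabs (Rabs u - Rabs v)) by apply Rabs_triang.
  unfold Rdiv at 1. rewrite Rabs_mult. rewrite (Rabs_pos_eq (/ 2)) by lra. lra.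
Qed.

Lemma tent_props c w t x : 0 < w -> 0 <= t ->
  0 <= tent c w t x <= t /\
  (w <= Rabs (x - c) -> tent c w t x = 0) /\
  (Rabs (x - c) <= w / 2 -> t / 2 <= tent c w t x).
Proof.
  intros hw ht. unfold tent.
  assert (Hr : forall r, r = Rabs (x - c) / w -> r * w = Rabs (x - c)) by (intros r ->; field; lra).
  specialize (Hr _ eq_refl).
  assert (0 <= Rabs (x - c)) by apply Rabs_pos.
  set (r := Rabs (x - c) / w) in *. clearbody r.
  assert (0 <= r) by nra.
  destruct (Rle_dec r 1) as [H1|H1].
  - rewrite (Rabs_pos_eq (1 - r)) by lra.
    replace (t * ((1 - r + (1 - r)) / 2)) with (t * (1 - r)) by field.
    split; [|split]; intros; try split; nra.
  - rewrite (Rabs_left (1 - r)) by lra.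
    replace (t * ((1 - r + - (1 - r)) / 2)) with 0 by field.
    split; [|split]; intros; try split; nra.
Qed.

Lemma RInt_split3 a b u v (f : R -> R) : a <= u -> u <= v -> v <= b -> ex_RInt f a b ->
  ex_RInt f a u /\ ex_RInt f u v /\ ex_RInt f v b /\
  RInt f a b = RInt f a u + RInt f u v + RInt f v b.
Proof.
  intros h1 h2 h3 hf.
  assert (hav : ex_RInt f a v) by (apply (ex_RInt_Chasles_1 (V := R_CompleteNormedModule)) with b; auto; lra).
  assert (hau : ex_RInt f a u) by (apply (ex_RInt_Chasles_1 (V := R_CompleteNormedModule)) with v; auto; lra).
  assert (huv : ex_RInt f u v) by (apply (ex_RInt_Chasles_2 (V := R_CompleteNormedModule)) with a; auto; lra).
  assert (hvb : ex_RInt f v b) by (apply (ex_RInt_Chasles_2 (V := R_CompleteNormedModule)) with a; auto; lra).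
  repeat split; auto.
  rewrite <- (RInt_Chasles (V := R_CompleteNormedModule) f a v b) by auto.
  rewrite <- (RInt_Chasles (V := R_CompleteNormedModule) f a u v) by auto.
  reflexivity.
Qed.

Lemma RInt_lower a b u v (f : R -> R) K : a <= u -> u <= v -> v <= b -> ex_RInt f a b ->
  (forall x, a < x < b -> 0 <= f x) -> (forall x, u < x < v -> K <= f x) ->
  K * (v - u) <= RInt f a b.
Proof.
  intros h1 h2 h3 hf H0 HK.
  destruct (RInt_split3 a b u v f h1 h2 h3 hf) as [hau [huv [hvb E]]].
  rewrite E.
  assert (0 <= RInt f a u) by (apply RInt_ge_0; auto; intros; apply H0; lra).
  assert (0 <= RInt f v b) by (apply RInt_ge_0; auto; intros; apply H0; lra).
  assert (HH : RInt (fun _ => K) u v <= RInt f u v) by (apply RInt_le; auto; apply ex_RInt_const).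
  rewrite RInt_const in HH. unfold scal in HH; simpl in HH; unfold mult in HH; simpl in HH.
  lra.
Qed.

Lemma RInt_upper a b u v (f : R -> R) K : a <= u -> u <= v -> v <= b -> ex_RInt f a b ->
  (forall x, a < x < b -> (x <= u \/ v <= x) -> f x <= 0) -> (forall x, u < x < v -> f x <= K) ->
  RInt f a b <= K * (v - u).
Proof.
  intros h1 h2 h3 hf H0 HK.
  destruct (RInt_split3 a b u v f h1 h2 h3 hf) as [hau [huv [hvb E]]].
  rewrite E.
  assert (RInt f a u <= RInt (fun _ => 0) a u) by (apply RInt_le; auto; [apply ex_RInt_const| intros; apply H0; lra]).
  assert (RInt f v b <= RInt (fun _ => 0) v b) by (apply RInt_le; auto; [apply ex_RInt_const| intros; apply H0; lra]).
  assert (RInt f u v <= RInt (fun _ => K) u v) by (apply RInt_le; auto; apply ex_RInt_const).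
  rewrite !RInt_const in *. unfold scal in *; simpl in *; unfold mult in *; simpl in *.
  lra.
Qed.

Section Est.
Variables (a b : R) (g : R -> R) (s : nat) (q sg g0 al L w t : R).
Hypotheses (hab : a < b) (hg : cont_on a b g) (hs : (1 <= s)%nat) (hq : 0 < q)
  (hsg : sg = 1 \/ sg = -1) (hg0 : 0 < g0) (hL : 0 < L) (hal : a <= al) (halL : al + L <= b)
  (hgp : forall y, al <= y <= al + L -> g0 / 2 <= sg * g y)
  (hw : 0 < w) (hwL : w <= L / 2) (ht : 0 < t).

Let c := al + L / 2.
Let h := tent c w t.

Lemma est_inX : in_X a b h /\ h c = t.
Proof.
  split. split. apply cont_on_glob. apply tent_cont; lra.
  unfold h. split; apply tent_props; try lra.
  rewrite Rabs_left by (unfold c; lra). unfold c; lra.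
  rewrite Rabs_pos_eq by (unfold c; lra). unfold c; lra.
  unfold h, tent. rewrite Rminus_eq_0, Rabs_R0. unfold Rdiv. rewrite Rmult_0_l, Rminus_0_r, Rabs_R1. field.
Qed.

Lemma pow0s : 0 ^ s = 0.
Proof. destruct s. lia. simpl; ring. Qed.

Lemma est_X : g0 / 2 * (t / 2) ^ s * w <= Rabs (RInt (fun x => g x * h x ^ s) a b).
Proof.
  assert (hc : cont_on a b (fun x => g x * h x ^ s)).
  { apply cont_on_mult; auto. apply cont_on_pow. apply cont_on_glob, tent_cont; lra. }
  assert (hi : ex_RInt (fun x => g x * h x ^ s) a b) by (apply ex_RInt_cont_on; auto; lra).
  assert (E : RInt (fun x => sg * (g x * h x ^ s)) a b = sg * RInt (fun x => g x * h x ^ s) a b).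
  { apply (RInt_scal (V := R_CompleteNormedModule)); auto. }
  assert (Hl : g0 / 2 * (t / 2) ^ s * ((c + w / 2) - (c - w / 2)) <= RInt (fun x => sg * (g x * h x ^ s)) a b).
  { apply RInt_lower; try (unfold c; lra).
    - apply ex_RInt_cont_on; try lra. apply cont_on_mult; auto. apply cont_on_const.
    - intros x Hx. destruct (tent_props c w t x hw ltac:(lra)) as [[H0 H1] [H2 H3]].
      fold h in H0, H1, H2, H3.
      destruct (Rlt_le_dec (Rabs (x - c)) w) as [Hlt|Hge].
      + assert (al <= x <= al + L).
        { apply Rabs_lt_between' in Hlt. unfold c in Hlt. lra. }
        specialize (hgp x H). rewrite <- Rmult_assoc.
        apply Rmult_le_pos. lra. apply pow_le; lra.
      + rewrite (H2 Hge), pow0s. lra.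
    - intros x Hx. destruct (tent_props c w t x hw ltac:(lra)) as [[H0 H1] [H2 H3]].
      fold h in H0, H1, H2, H3.
      assert (Hx' : Rabs (x - c) <= w / 2).
      { apply Rabs_le_between'. lra. }
      assert (al <= x <= al + L) by (unfold c in Hx; lra).
      specialize (hgp x H). specialize (H3 Hx'). rewrite <- Rmult_assoc.
      apply Rmult_le_compat; try lra. apply pow_le; lra. apply pow_incr; lra. }
  replace ((c + w / 2) - (c - w / 2)) with w in Hl by field.
  rewrite E in Hl.
  assert (sg * RInt (fun x => g x * h x ^ s) a b <= Rabs (RInt (fun x => g x * h x ^ s) a b)).
  { destruct hsg as [-> | ->]. rewrite Rmult_1_l; apply Rle_abs.
    rewrite <- Rabs_Ropp. replace (-1 * RInt (fun x => g x * h x ^ s) a b) with (- RInt (fun x => g x * h x ^ s) a b) by ring. apply Rle_abs. }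
  lra.
Qed.

Lemma est_I : Rpower (t / 2) q * w <= RInt (fun x => rpow (Rabs (h x)) q) a b /\
  RInt (fun x => rpow (Rabs (h x)) q) a b <= Rpower t q * (2 * w).
Proof.
  assert (hi : ex_RInt (fun x => rpow (Rabs (h x)) q) a b).
  { apply ex_RInt_cont_on; try lra. apply cont_on_rpow; auto. apply cont_on_glob, tent_cont; lra. }
  split.
  - apply Rle_trans with (Rpower (t / 2) q * ((c + w / 2) - (c - w / 2))).
    right; f_equal; field.
    apply RInt_lower; try (unfold c; lra); auto.
    + intros; apply rpow_ge0.
    + intros x Hx. destruct (tent_props c w t x hw ltac:(lra)) as [[H0 H1] [H2 H3]].
      fold h in H0, H1, H2, H3.
      assert (Hx' : Rabs (x - c) <= w / 2) by (apply Rabs_le_between'; lra).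
      specialize (H3 Hx').
      rewrite Rabs_pos_eq, rpow_pos by lra.
      apply Rle_Rpower_l; lra.
  - apply Rle_trans with (Rpower t q * ((c + w) - (c - w))).
    2:{ right; f_equal; field. }
    apply RInt_upper; try (unfold c; lra); auto.
    + intros x Hx Ho. destruct (tent_props c w t x hw ltac:(lra)) as [[H0 H1] [H2 H3]].
      fold h in H0, H1, H2, H3.
      rewrite H2. rewrite Rabs_R0, rpow_0. lra.
      unfold Rabs; destruct Rcase_abs; lra.
    + intros x Hx. destruct (tent_props c w t x hw ltac:(lra)) as [[H0 H1] [H2 H3]].
      fold h in H0, H1, H2, H3.
      rewrite Rabs_pos_eq by lra. destruct H0 as [H0|H0].
      * rewrite rpow_pos by lra. apply Rle_Rpower_l; lra.
      * rewrite <- H0, rpow_0. left; apply exp_pos.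
Qed.

End Est.

Lemma exp_le (x y : R) : x <= y -> exp x <= exp y.
Proof. intros [H|H]. left; apply exp_increasing; auto. right; subst; auto. Qed.

Lemma Rpower_le_self x q : 0 < x <= 1 -> 1 <= q -> Rpower x q <= x.
Proof.
  intros [h0 h1] hq. unfold Rpower.
  assert (ln x <= 0).
  { destruct h1 as [h1|h1]. rewrite <- ln_1. left; apply ln_increasing; auto. subst; rewrite ln_1; lra. }
  rewrite <- (exp_ln x) at 2 by auto. apply exp_le. nra.
Qed.

Definition Hprop a b g s p := forall eps : R, 0 < eps -> exists delta : R, 0 < delta /\
      forall h : R -> R, in_X a b h ->
        (exists x, a <= x <= b /\ h x <> 0) ->
        pnorm a b p h < delta ->
        Rabs (/ pnorm a b p h * RInt (fun x => g x * h x ^ s) a b) < eps.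

Lemma bwd_core a b g s q sg g0 al L : a < b -> cont_on a b g ->
  (2 <= s)%nat -> 1 <= q -> q < INR s ->
  (sg = 1 \/ sg = -1) -> 0 < g0 -> 0 < L -> a <= al -> al + L <= b ->
  (forall y, al <= y <= al + L -> g0 / 2 <= sg * g y) ->
  Hprop a b g s (Finite q) -> False.
Proof.
  intros hab hg hs hq1 hqs hsg hg0 hL hal halL hgp H.
  destruct (H 1 Rlt_0_1) as [delta [hd Hd]].
  set (nu := Rmin (delta / 2) (Rmin 1 L)).
  assert (hnu1 : nu <= delta / 2) by apply Rmin_l.
  assert (hnu2 : nu <= 1) by (eapply Rle_trans; [apply Rmin_r| apply Rmin_l]).
  assert (hnu3 : nu <= L) by (eapply Rle_trans; [apply Rmin_r| apply Rmin_r]).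
  assert (hnu : 0 < nu) by (apply Rmin_pos; [lra| apply Rmin_pos; lra]).
  clearbody nu.
  set (e := INR s - q). assert (he : 0 < e) by (unfold e; lra).
  assert (h2s : 0 < 2 ^ s) by (apply pow_lt; lra).
  assert (hPnu : 0 < Rpower nu q) by apply exp_pos.
  set (A := g0 / 2 / 2 ^ s / 2 * Rpower nu q / nu).
  assert (hA : 0 < A).
  { unfold A. apply Rdiv_lt_0_compat; auto. apply Rmult_lt_0_compat; auto.
    repeat apply Rdiv_lt_0_compat; lra. }
  set (M := Rmax 1 (/ A)).
  assert (hM1 : 1 <= M) by apply Rmax_l.
  assert (hM2 : / A <= M) by apply Rmax_r.
  set (t := Rpower M (/ e)).
  assert (ht1 : 1 <= t).
  { unfold t. rewrite <- (Rpower_O M) by lra. apply Rle_Rpower; auto.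
    left; apply Rinv_0_lt_compat; auto. }
  assert (hte : Rpower t e = M).
  { unfold t. rewrite Rpower_mult, Rinv_l by lra. apply Rpower_1; lra. }
  clearbody t.
  assert (hPt : 0 < Rpower t q) by apply exp_pos.
  set (w := Rpower (nu / t) q / 2).
  assert (hnut : 0 < nu / t) by (apply Rdiv_lt_0_compat; lra).
  assert (Ent : nu / t * t = nu) by (field; lra).
  assert (hnut2 : nu / t <= nu) by nra.
  assert (hw : 0 < w) by (unfold w; assert (0 < Rpower (nu / t) q) by apply exp_pos; lra).
  assert (hwL : w <= L / 2).
  { unfold w. assert (Rpower (nu / t) q <= nu / t) by (apply Rpower_le_self; lra). lra. }
  assert (E2w : Rpower t q * (2 * w) = Rpower nu q).
  { unfold w. replace (2 * (Rpower (nu / t) q / 2)) with (Rpower (nu / t) q) by field.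
    rewrite Rpower_mult_distr by lra. f_equal. field. lra. }
  clearbody w.
  assert (ht : 0 < t) by lra.
  destruct (est_inX a b al L w t hL hal halL hw hwL ht) as [hX hc].
  destruct (est_I a b q al L w t hab ltac:(lra) hL hal halL hw hwL ht) as [I1 I2].
  assert (hXl := est_X a b g s sg g0 al L w t hab hg ltac:(lia) hsg hg0 hL hal halL hgp hw hwL ht).
  set (h := tent (al + L / 2) w t) in *.
  clearbody h.
  set (I := RInt (fun x => rpow (Rabs (h x)) q) a b) in *.
  set (X := RInt (fun x => g x * h x ^ s) a b) in *.
  assert (hI : 0 < I).
  { assert (0 < Rpower (t / 2) q * w) by (apply Rmult_lt_0_compat; auto; apply exp_pos). lra. }
  assert (EN : pnorm a b (Finite q) h = Rpower I (/ q)).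
  { unfold pnorm. fold I. apply rpow_pos; auto. }
  assert (hN : 0 < Rpower I (/ q)) by apply exp_pos.
  assert (hNnu : Rpower I (/ q) <= nu).
  { eapply Rle_trans. apply Rle_Rpower_l. left; apply Rinv_0_lt_compat; lra. split. exact hI. exact I2.
    rewrite E2w, Rpower_mult, Rinv_r by lra. rewrite Rpower_1 by lra. lra. }
  assert (Hlt : Rabs (/ pnorm a b (Finite q) h * X) < 1).
  { apply Hd; auto. exists (al + L / 2). split. lra. rewrite hc. lra.
    rewrite EN. lra. }
  rewrite EN in Hlt. clear EN.
  rewrite Rabs_mult, Rabs_inv, (Rabs_pos_eq (Rpower I (/ q))) in Hlt by lra.
  set (N := Rpower I (/ q)) in *. clearbody N.
  assert (Key : / nu * (g0 / 2 * (t / 2) ^ s * w) = A * Rpower t e).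
  { unfold A, e, Rminus. rewrite Rpower_plus, Rpower_Ropp, Rpower_pow by lra.
    assert (Hw2 : 2 * w * Rpower t q = Rpower nu q) by lra.
    replace ((t / 2) ^ s) with (t ^ s / 2 ^ s) by (unfold Rdiv; rewrite Rpow_mult_distr, pow_inv; reflexivity).
    replace w with (Rpower nu q / Rpower t q / 2) by (rewrite <- Hw2; field; lra).
    field. repeat split; lra. }
  rewrite hte in Key.
  assert (/ nu * Rabs X <= / N * Rabs X).
  { apply Rmult_le_compat_r. apply Rabs_pos. apply Rinv_le_contravar; lra. }
  assert (/ nu * (g0 / 2 * (t / 2) ^ s * w) <= / nu * Rabs X).
  { apply Rmult_le_compat_l; auto. left; apply Rinv_0_lt_compat; lra. }
  assert (A * M >= 1).
  { assert (A * / A = 1) by (field; lra). nra. }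
  lra.
Qed.

Lemma bwd a b g s q : a < b -> cont_on a b g -> (exists x, a <= x <= b /\ g x <> 0) ->
  (2 <= s)%nat -> 1 <= q -> q < INR s -> Hprop a b g s (Finite q) -> False.
Proof.
  intros hab hg [x0 [Hx0 Hgx0]] hs hq1 hqs H.
  set (g0 := Rabs (g x0)).
  assert (hg0 : 0 < g0) by (apply Rabs_pos_lt; auto).
  set (sg := if Rle_dec 0 (g x0) then 1 else -1).
  assert (hsg : sg = 1 \/ sg = -1) by (unfold sg; destruct Rle_dec; auto).
  assert (hsg0 : sg * g x0 = g0) by (unfold sg, g0; destruct Rle_dec;
         [rewrite Rabs_pos_eq by lra; ring | rewrite Rabs_left by lra; ring]).
  clearbody sg.
  assert (Hc := hg x0 Hx0).
  apply filterlim_locally with (eps := mkposreal (g0 / 2) ltac:(lra)) in Hc.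
  destruct Hc as [d0 Hd0].
  assert (hclose : forall y, a <= y <= b -> Rabs (y - x0) < d0 -> g0 / 2 <= sg * g y).
  { intros y Hy Hyd. specialize (Hd0 y Hyd Hy).
    change (Rabs (g y - g x0) < g0 / 2) in Hd0.
    replace (sg * g y) with (sg * g x0 + sg * (g y - g x0)) by ring.
    assert (- Rabs (g y - g x0) <= sg * (g y - g x0)).
    { assert (- (g y - g x0) <= Rabs (g y - g x0)) by (rewrite <- Rabs_Ropp; apply Rle_abs).
      assert ((g y - g x0) <= Rabs (g y - g x0)) by apply Rle_abs.
      destruct hsg as [-> | ->]; lra. }
    lra. }
  set (L := Rmin (d0 / 2) ((b - a) / 2)).
  assert (d0pos := cond_pos d0).
  assert (hL : 0 < L) by (apply Rmin_pos; lra).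
  assert (hL1 : L <= d0 / 2) by apply Rmin_l.
  assert (hL2 : L <= (b - a) / 2) by apply Rmin_r.
  set (al := if Rle_dec (x0 + L) b then x0 else x0 - L).
  assert (hal : a <= al /\ al + L <= b /\ forall y, al <= y <= al + L -> Rabs (y - x0) < d0)
    by (unfold al; destruct Rle_dec; repeat split; try lra;
        intros y Hy; apply Rabs_lt_between'; lra).
  clearbody al; destruct hal as [hal [halL hald]].
  apply (bwd_core a b g s q sg g0 al L); auto.
  intros y Hy; apply hclose; [lra | apply hald; auto].
Qed.

Theorem lemma1 (a b : R) (g : R -> R) (s : nat) (p : Rbar) :
  a < b ->
  cont_on a b g ->
  (exists x, a <= x <= b /\ g x <> 0) ->
  (2 <= s)%nat ->
  Rbar_le (Finite 1) p ->
  ((forall eps : R, 0 < eps -> exists delta : R, 0 < delta /\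
      forall h : R -> R, in_X a b h ->
        (exists x, a <= x <= b /\ h x <> 0) ->
        pnorm a b p h < delta ->
        Rabs (/ pnorm a b p h * RInt (fun x => g x * h x ^ s) a b) < eps)
   <-> Rbar_le (Finite (INR s)) p).
Proof.
  intros hab hg hgx hs hp1. split.
  - intros H. destruct p as [q| |]; simpl in hp1 |- *; try contradiction; auto.
    destruct (Rle_dec (INR s) q) as [Hq|Hq]; auto.
    exfalso. apply (bwd a b g s q); auto. lra.
  - intros hps. apply fwd; auto.
Qed.
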